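(* Let $\varphi:\Lambda\to\Gamma$ be a regular covering map of finite simplicial graphs, let $v$ be a vertex of $\Gamma$, $[v]_\varphi$ its $\varphi$-equivalence class, and $\gamma_v$ any permutation of $[v]_\varphi$. Then the map $\gamma$ of $V\Gamma$ defined by $\gamma(w)=\gamma_v(w)$ for $w\in[v]_\varphi$ and $\gamma(w)=w$ otherwise is a graph symmetry of $\Gamma$ which is liftable.
   Context: Graphs are finite simplicial graphs; $\mathrm{lk}(x)$ is the subgraph induced by neighbours of $x$, $\mathrm{st}(x)$ induced by $\mathrm{lk}(x)\cup\{x\}$. $A_\Gamma$ is the right-angled Artin group with generators $V\Gamma$ and relations $[a,b]=1$ for edges; a graph symmetry is regarded as an automorphism of $A_\Gamma$ permuting generators. A covering map $\varphi:\Lambda\to\Gamma$ is a surjective simplicial map mapping the neighbours of each vertex $u$ bijectively onto the neighbours of $\varphi(u)$; regular means the group of graph automorphisms $\mu$ of $\Lambda$ with $\varphi\mu=\varphi$ acts transitively on each fiber. $\phi:A_\Lambda\to A_\Gamma$ is induced by $\varphi$; $f\in\mathrm{Aut}(A_\Gamma)$ is liftable if there is $F\in\mathrm{Aut}(A_\Lambda)$ with $f\circ\phi=\phi\circ F$. For vertices $x,y$ of $\Gamma$, $x\lesssim_\varphi y$ means: for every $u\in\varphi^{-1}(x)$ there is $u'\in\varphi^{-1}(y)$ with $\mathrm{lk}(u)\subseteq\mathrm{st}(u')$; $x,y$ are $\varphi$-equivalent if $x\lesssim_\varphi y$ and $y\lesssim_\varphi x$, and $[v]_\varphi$ is the set of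 vertices $\varphi$-equivalent to $v$. *)

(* Defs.v *)
From Stdlib Require Import Relation_Operators.
From mathcomp Require Import all_boot.
From mathcomp Require Import fingroup perm.
Set Implicit Arguments. Unset Strict Implicit. Unset Printing Implicit Defensive.

Definition simple_graph (T : finType) (e : rel T) : Prop := symmetric e /\ irreflexive e.

Definition graph_sym (T : finType) (e : rel T) (g : T -> T) : Prop :=
  bijective g /\ forall x y, e (g x) (g y) = e x y.

(* covering map: surjective simplicial map, bijective on neighbourhoods *)
Definition covering (TL TG : finType) (eL : rel TL) (eG : rel TG) (phi : TL -> TG) : Prop :=
  [/\ (forall x : TG, exists u : TL, phi u = x),
      (forall u w, eL u w -> eG (phi u) (phi w)),
      (forall u w1 w2, eL u w1 -> eL u w2 -> phi w1 = phi w2 -> w1 = w2) &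
      (forall u y, eG (phi u) y -> exists2 w, eL u w & phi w = y)].

(* regular: deck group acts transitively on each fiber *)
Definition regular_covering (TL TG : finType) (eL : rel TL) (phi : TL -> TG) : Prop :=
  forall u u', phi u = phi u' ->
    exists mu : TL -> TL, [/\ graph_sym eL mu, (forall x, phi (mu x) = phi x) & mu u = u'].

(* x <~_phi y : every lift u of x has a lift u' of y with lk(u) \subset st(u') *)
Definition phi_le (TL TG : finType) (eL : rel TL) (phi : TL -> TG) (x y : TG) : bool :=
  [forall u, (phi u == x) ==>
     [exists u', (phi u' == y) && [forall w, eL u w ==> (w == u') || eL u' w]]].

Definition phi_equiv (TL TG : finType) (eL : rel TL) (phi : TL -> TG) (x y : TG) : bool :=
  phi_le eL phi x y && phi_le eL phi y x.

Notation phi_class eL phi v := (sig (fun w => is_true (phi_equiv eL phi v w))).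

Definition extend_perm (TL TG : finType) (eL : rel TL) (phi : TL -> TG) (v : TG)
  (gv : {perm phi_class eL phi v}) (w : TG) : TG :=
  match insub w : option (phi_class eL phi v) with
  | Some x => val (gv x)
  | None => w
  end.

(* a letter (x, true) is the generator x, (x, false) its inverse *)
Definition word (T : Type) := seq (T * bool).

Inductive raag_step (T : Type) (e : T -> T -> bool) : word T -> word T -> Prop :=
| rs_free (u w : word T) (x : T) (b : bool) :
    raag_step e (u ++ (x, b) :: (x, ~~ b) :: w) (u ++ w)
| rs_comm (u w : word T) (x y : T) (b c : bool) :
    e x y -> raag_step e (u ++ (x, b) :: (y, c) :: w) (u ++ (y, c) :: (x, b) :: w).

Definition raag_eq (T : Type) (e : T -> T -> bool) : word T -> word T -> Prop :=
  clos_refl_sym_trans _ (raag_step e).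

Definition winv (T : Type) (w : word T) : word T := rev (map (fun p => (p.1, ~~ p.2)) w).

Definition wsubst (S T : Type) (f : S -> word T) (w : word S) : word T :=
  flatten (map (fun p => if p.2 then f p.1 else winv (f p.1)) w).

(* an assignment of generators defines a homomorphism A_S -> A_T *)
Definition is_hom (S T : Type) (eS : S -> S -> bool) (eT : T -> T -> bool) (f : S -> word T) : Prop :=
  forall a b, eS a b -> raag_eq eT (f a ++ f b) (f b ++ f a).

Definition is_raag_aut (T : Type) (e : T -> T -> bool) (F : T -> word T) : Prop :=
  is_hom e e F /\
  exists G : T -> word T, is_hom e e G /\
    forall a, raag_eq e (wsubst G (F a)) [:: (a, true)] /\
              raag_eq e (wsubst F (G a)) [:: (a, true)].

Definition induced_hom (TL TG : Type) (phi : TL -> TG) (u : TL) : word TG := [:: (phi u, true)].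

Definition sym_aut (T : Type) (g : T -> T) (a : T) : word T := [:: (g a, true)].

Definition liftable (TL TG : Type) (eL : TL -> TL -> bool) (eG : TG -> TG -> bool)
  (phi : TL -> TG) (f : TG -> word TG) : Prop :=
  exists F : TL -> word TL, is_raag_aut eL F /\
    forall u, raag_eq eG (wsubst f (induced_hom phi u)) (wsubst (induced_hom phi) (F u)).

(* Main.v *)
Require Import Defs.
From Stdlib Require Import Relation_Operators.
From mathcomp Require Import all_boot.
From mathcomp Require Import fingroup perm.
Set Implicit Arguments. Unset Strict Implicit. Unset Printing Implicit Defensive.

Definition tw (T : eqType) (e : rel T) (a b : T) : Prop :=
  forall z, z != a -> z != b -> e a z = e b z.

Lemma tw_refl (T : eqType) (e : rel T) a : tw e a a.
Proof. by []. Qed.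

Lemma tw_sym (T : eqType) (e : rel T) a b : tw e a b -> tw e b a.
Proof. by move=> H z h1 h2; rewrite H. Qed.

Lemma tw_trans (T : eqType) (e : rel T) a b c :
  symmetric e -> tw e a b -> tw e b c -> tw e a c.
Proof.
move=> sym Hab Hbc z za zc.
case: (eqVneq z b) => [Ez|zb]; last by rewrite Hab // Hbc.
rewrite Ez in za zc *.
case: (eqVneq a c) => [<-//|ac].
have E1 : e b a = e c a by apply: Hbc => //; rewrite eq_sym.
have E2 : e a c = e b c by apply: Hab => //; rewrite eq_sym.
by rewrite [e a b]sym E1 [e c a]sym E2 sym.
Qed.

Lemma tw_gsym (T : finType) (e : rel T) (g : T -> T) :
  symmetric e -> irreflexive e -> bijective g -> (forall x, tw e x (g x)) ->
  graph_sym e g.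
Proof.
move=> sym irr bij H; split=> // x y.
have ginj := bij_inj bij.
case: (eqVneq x y) => [->|xy]; first by rewrite !irr.
have gxy : g x != g y by rewrite (inj_eq ginj).
case: (eqVneq (g x) y) => [gxe|gxy'].
  case: (eqVneq (g y) x) => [gye|gyx].
    by rewrite gxe gye sym.
  have E1 : e x (g y) = e (g x) (g y) by apply: H => //; rewrite eq_sym.
  have E2 : e y x = e (g y) x by apply: H => //; rewrite eq_sym.
  by rewrite -E1 [e x (g y)]sym -E2 sym.
have E3 : e y (g x) = e (g y) (g x) by apply: H.
have E4 : e x y = e (g x) y by apply: H => //; rewrite eq_sym.
by rewrite [e (g x) (g y)]sym -E3 [e y (g x)]sym E4.
Qed.

Lemma ext_val (TL TG : finType) (eL : rel TL) (phi : TL -> TG) (v : TG)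
  (gv : {perm phi_class eL phi v}) y : extend_perm gv (val y) = val (gv y).
Proof. by rewrite /extend_perm valK. Qed.

Lemma ext_out (TL TG : finType) (eL : rel TL) (phi : TL -> TG) (v : TG)
  (gv : {perm phi_class eL phi v}) w : ~~ phi_equiv eL phi v w -> extend_perm gv w = w.
Proof. by move=> H; rewrite /extend_perm insubF //; apply/negbTE. Qed.

Lemma ext_mem (TL TG : finType) (eL : rel TL) (phi : TL -> TG) (v : TG)
  (gv : {perm phi_class eL phi v}) w : phi_equiv eL phi v w ->
  phi_equiv eL phi v (extend_perm gv w).
Proof. by move=> Hw; rewrite -(@SubK _ _ (phi_class eL phi v) w Hw) ext_val; apply: valP. Qed.

Lemma ext_K (TL TG : finType) (eL : rel TL) (phi : TL -> TG) (v : TG)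
  (s t : {perm phi_class eL phi v}) : (forall x, t (s x) = x) ->
  forall w, extend_perm t (extend_perm s w) = w.
Proof.
move=> H w; case: (boolP (phi_equiv eL phi v w)) => Hw.
  by rewrite -(@SubK _ _ (phi_class eL phi v) w Hw) !ext_val H.
by rewrite !ext_out.
Qed.

Lemma le_of_phi (TL TG : finType) (eL : rel TL) (eG : rel TG) (phi : TL -> TG)
  (Hcov : covering eL eG phi) x y :
  phi_le eL phi x y -> forall z, eG x z -> (z == y) || eG y z.
Proof.
case: Hcov => Hsurj Hedge Hinj Hlift H z xz.
have [u Hu] := Hsurj x.
move/forallP/(_ u)/implyP: H; rewrite Hu eqxx => /(_ isT) /existsP [u1 /andP [/eqP H1 /forallP H2]].
have [w uw Hw] : exists2 w, eL u w & phi w = z by apply: Hlift; rewrite Hu.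
move/implyP: (H2 w) => /(_ uw) /orP [/eqP E|E].
  by rewrite -Hw E H1 eqxx.
by apply/orP; right; rewrite -H1 -Hw; apply: Hedge.
Qed.

Lemma tw_of_equiv (TL TG : finType) (eL : rel TL) (eG : rel TG) (phi : TL -> TG)
  (Hcov : covering eL eG phi) x y : phi_equiv eL phi x y -> tw eG x y.
Proof.
move=> /andP [h1 h2] z zx zy; apply/idP/idP => h.
  by move: (le_of_phi Hcov h1 h); rewrite (negbTE zy).
by move: (le_of_phi Hcov h2 h); rewrite (negbTE zx).
Qed.

Lemma lift_tw (TL TG : finType) (eL : rel TL) (eG : rel TG) (phi : TL -> TG)
  (HL : simple_graph eL) (HG : simple_graph eG)
  (Hcov : covering eL eG phi) a b u u1 :
  tw eG a b -> phi u = a -> phi u1 = b ->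
  (forall w, eL u w -> (w == u1) || eL u1 w) -> tw eL u u1.
Proof.
case: HL => symL irrL; case: HG => symG irrG.
case: Hcov => Hsurj Hedge Hinj Hlift Htw Hu Hu1 H.
have H' : forall w, eL u1 w -> (w == u) || eL u w.
  move=> w hw; case: (eqVneq w u) => //= wu.
  have ebY : eG b (phi w) by rewrite -Hu1; apply: Hedge.
  case: (eqVneq (phi w) a) => [ya|ya].
    have eab : eG a b by rewrite symG -ya.
    have [w' h1 h2] : exists2 w', eL u w' & phi w' = b by apply: Hlift; rewrite Hu.
    move: (H w' h1) => /orP [/eqP E|h3].
      subst w'.
      have := Hinj u1 u w; rewrite symL => /(_ h1 hw); rewrite Hu ya => /(_ erefl) E.
      by rewrite E eqxx in wu.
    by move: (Hedge _ _ h3); rewrite h2 Hu1 irrG.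
  case: (eqVneq (phi w) b) => [yb|yb].
    by rewrite yb irrG in ebY.
  have eay : eG a (phi w) by rewrite (Htw (phi w) ya yb).
  have [w' h1 h2] : exists2 w', eL u w' & phi w' = phi w by apply: Hlift; rewrite Hu.
  move: (H w' h1) => /orP [/eqP E|h3].
    by rewrite -h2 E Hu1 eqxx in yb.
  by rewrite (Hinj u1 w w' hw h3 (esym h2)).
move=> z zu zu1; apply/idP/idP => h.
  by move: (H z h); rewrite (negbTE zu1).
by move: (H' z h); rewrite (negbTE zu).
Qed.

Lemma fdel (T : Type) (e : T -> T -> bool) (u w r : word T) x bb :
  raag_eq e (u ++ w) r -> raag_eq e (u ++ (x, bb) :: (x, ~~ bb) :: w) r.
Proof. by move=> H; apply: rst_trans H; apply: rst_step; apply: rs_free. Qed.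

Lemma wsubst1 (S T : Type) (f : S -> word T) x : wsubst f [:: (x, true)] = f x.
Proof. by rewrite /wsubst /= cats0. Qed.

Theorem lemma4p1 (TL TG : finType) (eL : rel TL) (eG : rel TG) (phi : TL -> TG)
  (HL : simple_graph eL) (HG : simple_graph eG)
  (Hcov : covering eL eG phi) (Hreg : regular_covering eL phi)
  (v : TG) (gv : {perm phi_class eL phi v}) :
  graph_sym eG (extend_perm gv) /\ liftable eL eG phi (sym_aut (extend_perm gv)).
Proof.
have HL' := HL; have HG' := HG; have Hcov' := Hcov.
case: HL' => symL irrL; case: HG' => symG irrG.
case: Hcov' => Hsurj Hedge Hinj Hlift.
set C := phi_equiv eL phi v.
set g := extend_perm gv.
set h := extend_perm gv^-1.
have ghK : cancel g h by apply: ext_K => x; rewrite permK.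
have hgK : cancel h g by apply: ext_K => x; rewrite permKV.
have twv : forall w, C w -> tw eG v w by move=> w; apply: tw_of_equiv.
have Cg : forall w, C w -> C (g w) by move=> w; apply: ext_mem.
have Ch : forall w, C w -> C (h w) by move=> w; apply: ext_mem.
have gout : forall w, ~~ C w -> g w = w by move=> w; apply: ext_out.
have Cv : C v.
  by apply/andP; split; apply/forallP => u; apply/implyP => /eqP Hu;
     apply/existsP; exists u; rewrite Hu eqxx /=; apply/forallP => w; apply/implyP => ->; rewrite orbT.
have twg : forall x, tw eG x (g x).
  move=> x; case: (boolP (C x)) => Hx; last by rewrite gout.
  by apply: (tw_trans symG (tw_sym (twv _ Hx))); apply: twv; apply: Cg.
split; first by apply: tw_gsym => //; exists h.
case: (boolP [exists y, eG v y]) => [/existsP [y0 vy0]|Hiso].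
  (* non-isolated case: lift by a graph symmetry *)
  have nonisoC : forall c, C c -> exists y, eG c y.
    move=> c Hc; case: (eqVneq y0 c) => [E|ne].
      by exists v; rewrite symG -E.
    exists y0; rewrite -(twv c Hc) //.
    by apply: contraTneq vy0 => ->; rewrite irrG.
  have Hex : forall u, exists u', [/\ phi u' = g (phi u), tw eL u u' & ~~ C (phi u) -> u' = u].
    move=> u; case: (boolP (C (phi u))) => Hc; last by exists u; rewrite gout.
    have Hc' := Hc; move/andP: Hc' => [_ Hcv].
    move/forallP/(_ u)/implyP: Hcv => /(_ (eqxx _)) /existsP [u1 /andP [/eqP H1 /forallP H2]].
    have Cgc := Cg _ Hc; have Cgc' := Cgc; move/andP: Cgc' => [Hvd _].
    move/forallP/(_ u1)/implyP: Hvd => /(_ (introT eqP H1)) /existsP [u2 /andP [/eqP H3 /forallP H4]].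
    exists u2; split => //.
    apply: (@tw_trans _ _ u u1 u2 symL).
      apply: (lift_tw HL HG Hcov (tw_sym (twv _ Hc)) erefl H1) => w hw.
      by move/implyP: (H2 w) => /(_ hw).
    apply: (lift_tw HL HG Hcov (twv _ Cgc) H1 H3) => w hw.
    by move/implyP: (H4 w) => /(_ hw).
  have [s Hs] := fin_all_exists Hex.
  have sinj : injective s.
    move=> u1 u2 E.
    have [p1 t1 o1] := Hs u1; have [p2 t2 o2] := Hs u2.
    have ephi : phi u1 = phi u2 by apply: (can_inj ghK); rewrite -p1 -p2 E.
    case: (boolP (C (phi u1))) => Hc; last first.
      by rewrite -(o1 Hc) -(o2 _) ?E // -ephi.
    have t12 : tw eL u1 u2 by apply: (tw_trans symL t1); rewrite E; apply: tw_sym.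
    case: (eqVneq u1 u2) => // ne.
    have [y cy] := nonisoC _ Hc.
    have [w uw Hw] : exists2 w, eL u1 w & phi w = y by apply: Hlift.
    have wu1 : w != u1 by apply: contraTneq uw => ->; rewrite irrL.
    have wu2 : w != u2.
      apply: contraTneq uw => ->; apply/negP => /Hedge; by rewrite -ephi irrG.
    have u2w : eL u2 w by rewrite -(t12 w wu1 wu2).
    by apply: (Hinj w); rewrite ?(symL w) // ephi.
  have sbij := injF_bij sinj.
  have sgs : graph_sym eL s by apply: tw_gsym => // x; have [] := Hs x.
  have [t stK tsK] := sbij.
  have tgs : forall a b, eL (t a) (t b) = eL a b.
    by move=> a b; rewrite -(sgs.2 (t a) (t b)) !tsK.
  exists (fun u => [:: (s u, true)]); split.
    split.
      move=> a b hab; apply: rst_step; apply: (@rs_comm _ _ [::] [::]).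
      by rewrite sgs.2.
    exists (fun u => [:: (t u, true)]); split.
      move=> a b hab; apply: rst_step; apply: (@rs_comm _ _ [::] [::]).
      by rewrite tgs.
    by move=> a; rewrite !wsubst1 stK tsK; split; apply: rst_refl.
  move=> u; rewrite /induced_hom /sym_aut !wsubst1.
  by have [-> _ _] := Hs u; apply: rst_refl.
have nv : forall y, eG v y = false.
  by move=> y; apply/negbTE; apply: contra Hiso => H; apply/existsP; exists y.
have isoC : forall c, C c -> forall y, eG c y = false.
  move=> c Hc y.
  case: (eqVneq y c) => [->|yc]; first by rewrite irrG.
  case: (eqVneq y v) => [->|yv]; first by rewrite symG nv.
  by rewrite -(twv c Hc y yv yc) nv.
have isoL : forall u, C (phi u) -> forall w, eL u w = false.
  by move=> u Hu w; apply/negbTE/negP => /Hedge; rewrite isoC.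
have [b Hb] := fin_all_exists Hsurj.
pose Fw (k : TG -> TG) (u : TL) : word TL :=
  if C (phi u) then [:: (u, true); (b (phi u), false); (b (k (phi u)), true)]
  else [:: (u, true)].
have Fhom : forall k, is_hom eL eL (Fw k).
  move=> k a b' hab.
  have na : ~~ C (phi a) by apply: contraTN hab => /isoL ->.
  have hab' : eL b' a by rewrite symL.
  have nb : ~~ C (phi b') by apply: contraTN hab' => /isoL ->.
  rewrite /Fw (negbTE na) (negbTE nb).
  by apply: rst_step; apply: (@rs_comm _ _ [::] [::]).
have Fcomp : forall k k', (forall c, C c -> C (k c)) -> (forall c, k' (k c) = c) ->
    forall a, raag_eq eL (wsubst (Fw k') (Fw k a)) [:: (a, true)].
  move=> k k' Ck kK a; rewrite /Fw.
  case: (boolP (C (phi a))) => Ha; last by rewrite wsubst1 (negbTE Ha); apply: rst_refl.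
  rewrite /wsubst /= !Hb kK Ha (Ck _ Ha) /=.
  apply: (@fdel _ _ [:: (a, true); (b (phi a), false)] _ _ _ true).
  apply: (@fdel _ _ [:: (a, true)] _ _ _ false).
  apply: (@fdel _ _ [:: (a, true); (b (phi a), false)] _ _ _ true).
  apply: (@fdel _ _ [:: (a, true)] _ _ _ false).
  exact: rst_refl.
exists (Fw g); split.
  split; first exact: Fhom.
  exists (Fw h); split; first exact: Fhom.
  by move=> a; split; apply: Fcomp.
move=> u; rewrite /induced_hom /sym_aut wsubst1 /Fw.
case: (boolP (C (phi u))) => Hu; last by rewrite wsubst1 gout //; apply: rst_refl.
rewrite /wsubst /= !Hb.
apply: rst_sym; apply: (@fdel _ _ [::] _ _ _ true); exact: rst_refl.
Qed.
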